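(* For every fixed $m\ge4$ and $k\ge3$ (with $k<m$) there exists $\vec p\in(0,1)^m$ such that for every sufficiently large $n$, $$\Pr_{P\sim(\pi_{\vec p})^n}\big(|(\mathrm{JR}\subseteq_?\mathrm{CORE})(P)|=0\big)=1-\exp(-\Omega(n))\quad\text{and}\quad\Pr_{P\sim(\pi_{\vec p})^n}\big(|(\mathrm{JR}=_?\mathrm{CORE})(P)|=0\big)=1-\exp(-\Omega(n)).$$
   Context: $\mathcal A=[m]$, $\mathcal A_k$ the $k$-subsets. Approval profile $P=(A_1,\dots,A_n)$, ballots i.i.d. from $\pi_{\vec p}$ with $\Pr(A)=\prod_{i\in A}p_i\prod_{i\notin A}(1-p_i)$. $\mathrm{JR}(P)$ is the set of $W\in\mathcal A_k$ such that for every set of voters $N'\subseteq[n]$ with $|N'|\ge n/k$ and $\bigcap_{j\in N'}A_j\ne\emptyset$ there is $j\in N'$ with $A_j\cap W\ne\emptyset$. $\mathrm{CORE}(P)$ is the set of $W\in\mathcal A_k$ such that for every nonempty $N'\subseteq[n]$ and $W'\subseteq\mathcal A$ with $|W'|/k\le|N'|/n$ some $j\in N'$ has $|A_j\cap W'|\le|A_j\cap W|$. For set-valued mappings: $(f_1\subseteq_?f_2)(P)=f_1(P)$ if $f_1(P)\subseteq f_2(P)$ and $\emptyset$ otherwise; $(f_1=_?f_2)(P)=f_1(P)$ if $f_1(P)=f_2(P)$ and $\emptyset$ otherwise. *)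

(* Defs.v *)
From HB Require Import structures.
From mathcomp Require Import all_boot all_order all_algebra.
From mathcomp Require Import reals sequences exp.
Set Implicit Arguments. Unset Strict Implicit. Unset Printing Implicit Defensive.
Import Order.TTheory GRing.Theory Num.Theory.
Local Open Scope ring_scope.

(* Alternatives are 'I_m; a ballot is a subset of alternatives. *)
Definition profile (m n : nat) := {ffun 'I_n -> {set 'I_m}}.

Definition ballot_prob {R : realType} {m : nat} (p : 'I_m -> R)
  (A : {set 'I_m}) : R :=
  (\prod_(i in A) p i) * \prod_(i in ~: A) (1 - p i).

Definition profile_prob {R : realType} {m n : nat} (p : 'I_m -> R)
  (P : profile m n) : R :=
  \prod_(j < n) ballot_prob p (P j).

Definition prob {R : realType} {m : nat} (n : nat) (p : 'I_m -> R)
  (E : pred (profile m n)) : R :=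
  \sum_(P : profile m n | E P) profile_prob p P.

(* JR(P): W in A_k such that every N' with |N'| >= n/k and nonempty common
   approval contains a voter j with A_j meeting W. (|N'| >= n/k <-> |N'|*k >= n) *)
Definition JR {m n : nat} (k : nat) (P : profile m n) : {set {set 'I_m}} :=
  [set W : {set 'I_m} | (#|W| == k) &&
    [forall N' : {set 'I_n},
       ((n <= #|N'| * k)%N && (\bigcap_(j in N') P j != set0)) ==>
       [exists j in N', P j :&: W != set0]]].

(* CORE(P): W in A_k such that for every nonempty N' and W' with
   |W'|/k <= |N'|/n (i.e. |W'|*n <= |N'|*k) some j in N' has
   |A_j cap W'| <= |A_j cap W|. *)
Definition CORE {m n : nat} (k : nat) (P : profile m n) : {set {set 'I_m}} :=
  [set W : {set 'I_m} | (#|W| == k) &&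
    [forall N' : {set 'I_n}, forall W' : {set 'I_m},
       ((N' != set0) && (#|W'| * n <= #|N'| * k)%N) ==>
       [exists j in N', (#|P j :&: W'| <= #|P j :&: W|)%N]]].

Definition subset_q {m n : nat} (f1 f2 : profile m n -> {set {set 'I_m}})
  (P : profile m n) : {set {set 'I_m}} :=
  if f1 P \subset f2 P then f1 P else set0.

Definition eq_q {m n : nat} (f1 f2 : profile m n -> {set {set 'I_m}})
  (P : profile m n) : {set {set 'I_m}} :=
  if f1 P == f2 P then f1 P else set0.

Arguments prob {R m} n p E.

(* Main.v *)
Require Import Defs.
From HB Require Import structures.
From mathcomp Require Import all_boot all_order all_algebra.
From mathcomp Require Import reals sequences exp.
From mathcomp Require Import lra zify.
Import Order.TTheory GRing.Theory Num.Theory.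
Local Open Scope ring_scope.

Lemma sum_ballot {R : realType} {m : nat} (p : 'I_m -> R) :
  \sum_(A : {set 'I_m}) ballot_prob p A = 1.
Proof.
have := @bigA_distr R 0 1 *%R +%R _ p (fun i => 1 - p i).
rewrite (eq_bigr (fun _ => 1)); last by move=> i _; rewrite /= addrC subrK.
rewrite big1_eq => ->; apply: eq_bigr => A _.
rewrite /ballot_prob [RHS](bigID (mem A)) /=; congr (_ * _).
  by apply: eq_bigr => i ->.
by apply: eq_big => [i|i]; rewrite ?in_setC // => /negbTE ->.
Qed.

Lemma sum_prod {R : realType} {m n : nat} (f : {set 'I_m} -> R) :
  \sum_(P : profile m n) \prod_(j < n) f (P j) = (\sum_A f A) ^+ n.
Proof.
rewrite -(bigA_distr_bigA (fun (j : 'I_n) A => f A)) /=.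
by rewrite prodr_const card_ord.
Qed.

Lemma bern {R : realType} (d : R) (n : nat) : 0 <= d <= 1 -> 1 - n%:R * d <= (1 - d) ^+ n.
Proof.
move=> /andP[d0 d1]; elim: n => [|n IH]; first by rewrite mul0r subr0 expr0.
rewrite exprS; have h : 0 <= 1 - d by rewrite subr_ge0.
apply: le_trans (ler_wpM2l h IH). rewrite -natr1 mulrDl mul1r mulrC; have: 0 <= n%:R * d by apply: mulr_ge0. nra.
Qed.
Lemma det {m n k : nat} (hk : (3 <= k)%N) (P : profile m n) (a b : 'I_m) (W : {set 'I_m}) :
  a != b -> a \in W -> b \notin W -> #|W| = k ->
  (#|[set j | P j != [set a; b]]| * k < n)%N ->
  W \in JR k P /\ W \notin CORE k P.
Proof.
move=> ab aW bW hW.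
set S0 := [set a; b]; set Bd := [set j | P j != S0] => hB.
split.
  rewrite inE hW eqxx /=; apply/forallP => N'; apply/implyP => /andP[hN _].
  case: (boolP [exists j in N', P j :&: W != set0]) => // /exists_inPn H.
  have sub : N' \subset Bd.
    apply/subsetP => j jN; rewrite inE; apply/negP => /eqP PS.
    have := H j jN; rewrite negbK PS => /eqP/setP/(_ a).
    by rewrite !inE aW eqxx.
  have := subset_leq_card sub => h.
  have : (n <= #|Bd| * k)%N by apply: leq_trans hN _; rewrite leq_mul2r h orbT.
  by rewrite leqNgt hB.
rewrite inE hW eqxx /=; apply/negP => /forallP /(_ (~: Bd)) /forallP /(_ S0) /implyP H.
have cB : #|~: Bd| = (n - #|Bd|)%N.
  have e := cardsC Bd; rewrite card_ord in e; move: e; move: #|~: Bd| #|Bd| => x y; lia.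
have hS0 : #|S0| = 2%N by rewrite cards2 ab.
have h3 : (3 * n <= k * n)%N by rewrite leq_mul2r hk orbT.
have hBn : (#|Bd| <= n)%N.
  by have := max_card (mem Bd); rewrite [#|'I_n|]card_ord.
have hG : (2 * n <= (n - #|Bd|) * k)%N.
  rewrite mulnBl; nia.
have ne : ~: Bd != set0.
  apply/negP => /eqP e; move: cB; rewrite e cards0 => cB.
  have : (#|Bd| <= #|Bd| * k)%N by rewrite leq_pmulr //; lia.
  lia.
have /exists_inP [j jG] := H (ltac:(rewrite ne hS0 cB mulnC; by rewrite mulnC)).
have PS : P j = S0 by move: jG; rewrite !inE negbK => /eqP.
have SW : S0 :&: W = [set a].
  apply/setP => x; rewrite !inE; case: (eqVneq x a) => [->|xa] /=; first by rewrite aW.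
  by case: (eqVneq x b) => [->|] //=; rewrite (negbTE bW).
by rewrite PS setIid SW hS0 cards1.
Qed.

Lemma tail {R : realType} {m n k : nat} (p : 'I_m -> R) (S0 : {set 'I_m}) :
  (forall i, 0 <= p i <= 1) -> (4:R) ^+ k * (1 - ballot_prob p S0) <= 1 ->
  1 - (2^-1) ^+ n <= prob n p (fun P => (#|[set j | P j != S0]| * k < n)%N).
Proof.
move=> hp hS.
set E := (fun P : profile m n => _).
have bp0 A : 0 <= ballot_prob p A.
  apply: mulr_ge0; apply: prodr_ge0 => i _; have := hp i; lra.
have pp0 P : 0 <= profile_prob p P by apply: prodr_ge0.
have tot : \sum_(P : profile m n) profile_prob p P = 1.
  by rewrite /profile_prob sum_prod sum_ballot expr1n.
have -> : prob n p E = 1 - \sum_(P | ~~ E P) profile_prob p P.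
  by rewrite -tot (bigID E) /= addrK.
rewrite lerD2l lerN2.
pose g (A : {set 'I_m}) : R := if A != S0 then 4 ^+ k else 1.
have hg (P : profile m n) : \prod_(j < n) g (P j) = (4 ^+ k) ^+ #|[set j | P j != S0]|.
  rewrite -prodr_const [RHS]big_mkcond /=; apply: eq_bigr => j _.
  by rewrite inE /g; case: (P j != S0).
have h4 : (0:R) < 4 ^+ n by apply: exprn_gt0.
apply: (@le_trans _ _ (\sum_P profile_prob p P * (\prod_(j < n) g (P j)) / 4 ^+ n)).
  rewrite [X in _ <= X](bigID (fun P => ~~ E P)) /=.
  apply: le_trans (_ : _ <= \sum_(P | ~~ E P) profile_prob p P * (\prod_(j < n) g (P j)) / 4 ^+ n) _.
    apply: ler_sum => P nE; rewrite -mulrA -[X in X <= _]mulr1 ler_wpM2l //.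
    rewrite ler_pdivlMr // mul1r hg -exprM ler_eXn2l ?ltr1n //.
    by move: nE; rewrite /E -leqNgt mulnC.
  rewrite lerDl; apply: sumr_ge0 => P _; apply: mulr_ge0; last by rewrite invr_ge0 ltW.
  by apply: mulr_ge0 => //; apply: prodr_ge0 => j _; rewrite /g; case: ifP => // _; by rewrite exprn_ge0.
rewrite -mulr_suml.
have -> : \sum_P profile_prob p P * \prod_(j < n) g (P j) = (\sum_A ballot_prob p A * g A) ^+ n.
  rewrite -sum_prod; apply: eq_bigr => P _; by rewrite /profile_prob -big_split.
have hsum : \sum_A ballot_prob p A * g A <= 2.
  have t := sum_ballot p; rewrite (bigD1 S0) //= in t.
  rewrite (bigD1 S0) //= /g eqxx /= mulr1.
  rewrite (eq_bigr (fun A => ballot_prob p A * 4 ^+ k)); last by move=> A ->.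
  rewrite -mulr_suml.
  have r0 : 0 <= \sum_(A | A != S0) ballot_prob p A by apply: sumr_ge0.
  have e : \sum_(A | A != S0) ballot_prob p A = 1 - ballot_prob p S0 by rewrite -t addrC addrK.
  rewrite e mulrC; move: hS; rewrite -e; have := bp0 S0; lra.
have s0 : 0 <= \sum_A ballot_prob p A * g A.
  apply: sumr_ge0 => A _; apply: mulr_ge0 => //; rewrite /g; case: ifP => // _; by rewrite exprn_ge0.
apply: (@le_trans _ _ ((2:R) ^+ n / 4 ^+ n)).
  by rewrite ler_pM2r ?invr_gt0 // lerXn2r // nnegrE.
rewrite -expr_div_n; apply: lerXn2r; rewrite ?nnegrE //; first by apply: divr_ge0.
  by rewrite invr_ge0.
have -> : (4:R) = 2 * 2 by rewrite -natrM.
by rewrite invfM mulrA mulfV ?mul1r // pnatr_eq0.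
Qed.

Theorem proposition2 (R : realType) (m k : nat) :
  (4 <= m)%N -> (3 <= k)%N -> (k < m)%N ->
  exists p : 'I_m -> R, (forall i, 0 < p i < 1) /\
  exists c : R, 0 < c /\ exists N : nat, forall n : nat, (N <= n)%N ->
    1 - expR (- (c * n%:R)) <=
      prob n p (fun P => #|subset_q (@JR m n k) (@CORE m n k) P| == 0%N) /\
    1 - expR (- (c * n%:R)) <=
      prob n p (fun P => #|eq_q (@JR m n k) (@CORE m n k) P| == 0%N).
Proof.
move=> hm hk hkm.
have h0 : (0 < m)%N by lia.
have h1 : (1 < m)%N by lia.
pose a := Ordinal h0; pose b := Ordinal h1.
have ab : a != b by [].
pose W := [set widen_ord hkm i | i in 'I_k.+1] :\ b.
have aW : a \in W.
  rewrite !inE /=; apply/imsetP; exists ord0 => //; exact: val_inj.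
have bW : b \notin W by rewrite !inE eqxx.
have hW : #|W| = k.
  have := cardsD1 b [set widen_ord hkm i | i in 'I_k.+1].
  rewrite card_imset ?card_ord; last by move=> x y /(congr1 val) /= e; apply: val_inj.
  have -> : b \in [set widen_ord hkm i | i in 'I_k.+1].
    apply/imsetP; exists (@Ordinal k.+1 1 (ltac:(lia))) => //.
    exact: val_inj.
  by rewrite add1n => -[].
pose S0 := [set a; b].
have mpos : (0:R) < m%:R * 4 ^+ k by rewrite mulr_gt0 ?exprn_gt0 // ltr0n; lia.
pose d : R := (m%:R * 4 ^+ k)^-1.
have d0 : 0 < d by rewrite invr_gt0.
have d1 : d < 1.
  rewrite invf_lt1 //; apply: (@lt_le_trans _ _ (m%:R * 1)).
    by rewrite mulr1 ltr1n; lia.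
  by rewrite ler_wpM2l ?ler0n // exprn_ege1 // ler1n.
exists (fun i => if i \in S0 then 1 - d else d); split.
  by move=> i; case: ifP => _; lra.
exists (2^-1); split; first by rewrite invr_gt0.
exists 0%N => n _.
set p := (fun i => _).
have hp : forall i, 0 <= p i <= 1 by move=> i; rewrite /p; case: ifP => _; lra.
have hS : (4:R) ^+ k * (1 - ballot_prob p S0) <= 1.
  have -> : ballot_prob p S0 = (1 - d) ^+ m.
    rewrite /ballot_prob (eq_bigr (fun _ => 1 - d)); last by move=> i hi; rewrite /p hi.
    rewrite [X in _ * X](eq_bigr (fun _ => 1 - d)); last first.
      by move=> i; rewrite inE /p => /negbTE ->.
    rewrite !prodr_const -exprD cardsC card_ord //.
  have := bern d m (ltac:(apply/andP; split; lra) : 0 <= d <= 1).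
  have e : m%:R * d * 4 ^+ k = 1 by rewrite /d mulrAC mulfV // gt_eqF.
  have h4 : (0:R) <= 4 ^+ k by rewrite exprn_ge0.
  move=> hb; apply: (@le_trans _ _ (4 ^+ k * (m%:R * d))).
    by rewrite ler_wpM2l //; lra.
  by rewrite mulrC e.
have T := @tail R m n k p S0 hp hS.
have hE : forall P : profile m n, (#|[set j | P j != S0]| * k < n)%N ->
    (#|subset_q (@JR m n k) (@CORE m n k) P| == 0%N) &&
    (#|eq_q (@JR m n k) (@CORE m n k) P| == 0%N).
  move=> P hB; have [WJ WC] := @det m n k hk P a b W ab aW bW hW hB.
  rewrite /subset_q /eq_q.
  have -> : (JR k P \subset CORE k P) = false.
    by apply/negP => /subsetP /(_ W WJ); rewrite (negbTE WC).
  have -> : (JR k P == CORE k P) = false.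
    by apply/negP => /eqP e; move: WC; rewrite -e WJ.
  by rewrite cards0.
have mono : forall Q : pred (profile m n), (forall P : profile m n, (#|[set j | P j != S0]| * k < n)%N -> Q P) ->
    prob n p (fun P => (#|[set j | P j != S0]| * k < n)%N) <= prob n p Q.
  move=> Q hQ; rewrite /prob [X in _ <= X]big_mkcond [X in X <= _]big_mkcond /=.
  apply: ler_sum => P _; case: ifP => h; first by rewrite (hQ P h).
  case: ifP => _ //; apply: prodr_ge0 => j _; apply: mulr_ge0; apply: prodr_ge0 => i _;
    have := hp i; lra.
have ex : (2^-1 : R) ^+ n <= expR (- (2^-1 * n%:R)).
  rewrite mulrC -mulrN expRM_natl; apply: lerXn2r; rewrite ?nnegrE ?invr_ge0 ?expR_ge0 //.
  apply: le_trans (expR_ge1Dx _); lra.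
split; apply: le_trans (mono _ _); try (apply: le_trans T; lra);
  by move=> P /hE /andP[].
Qed.
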